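(* Let $I$ be a quasiconcave function satisfying $\int_0^t\frac{I(s)}{s}ds\lesssim I(t)$ for $t\in(0,1)$. Then $$(T_If)^{**}(t)\lesssim (T_If^{**})(t),\quad f\in\mathcal M_+(0,1),\ t\in(0,1).$$
   Context: A quasiconcave function is a nondecreasing bijection $I:(0,1)\to(0,1)$ with $I(0+)=0$, $I(1-)=1$ and $t\mapsto I(t)/t$ nonincreasing. $\mathcal M_+(0,1)$: nonnegative measurable functions; $f^*$: nonincreasing rearrangement; $f^{**}(t)=\frac1t\int_0^tf^*(s)ds$. $T_If(t)=\frac{I(t)}{t}\sup_{t\le s<1}\frac{s}{I(s)}f^*(s)$. $\lesssim$: up to a constant independent of $f,t$. *)

(* Defs.v *)
From HB Require Import structures.
From mathcomp Require Import all_boot all_order all_algebra.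
From mathcomp Require Import all_classical all_reals all_analysis.
From mathcomp Require Import measurable_realfun.
Set Implicit Arguments. Unset Strict Implicit. Unset Printing Implicit Defensive.
Import Order.TTheory GRing.Theory Num.Theory.
Import numFieldNormedType.Exports.
Local Open Scope classical_set_scope.
Local Open Scope ring_scope.
Local Open Scope ereal_scope.

Section Defs.
Variable R : realType.

Definition quasiconcave (I : R -> R) : Prop :=
  (forall x : R, (0 < x < 1)%R -> (0 < I x < 1)%R) /\
      (forall x y : R, (0 < x < 1)%R -> (0 < y < 1)%R -> I x = I y -> x = y) /\
      (forall y : R, (0 < y < 1)%R -> exists2 x : R, (0 < x < 1)%R & I x = y) /\
      (forall x y : R, (0 < x < 1)%R -> (0 < y < 1)%R -> (x <= y)%R -> (I x <= I y)%R) /\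
      (I x @[x --> (0%R : R)^'+] --> (0%R : R)) /\
      (I x @[x --> (1%R : R)^'-] --> (1%R : R)) /\
      (forall x y : R, (0 < x < 1)%R -> (0 < y < 1)%R -> (x <= y)%R ->
          (I y / y <= I x / x)%R).

Definition distrib (f : R -> \bar R) (s : R) : \bar R :=
  (@lebesgue_measure R) (`]0%R, 1%R[ `&` [set x | s%:E < f x]).

Definition rearr (f : R -> \bar R) (t : R) : \bar R :=
  ereal_inf [set s%:E | s in [set s : R | (0 <= s)%R /\ distrib f s <= t%:E]].

(* f^**(t) = (1/t) \int_0^t f^*(s) ds *)
Definition maxfun (f : R -> \bar R) (t : R) : \bar R :=
  (t^-1)%:E * \int[@lebesgue_measure R]_(s in `]0%R, t[) rearr f s.

Definition TI (I : R -> R) (f : R -> \bar R) (t : R) : \bar R :=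
  (I t / t)%:E *
  ereal_sup [set (s / I s)%:E * rearr f s | s in `[t, 1%R[].

End Defs.

(* Main.v *)
Require Import Defs.
From HB Require Import structures.
From mathcomp Require Import all_boot all_order all_algebra.
From mathcomp Require Import all_classical all_reals all_analysis.
From mathcomp Require Import measurable_realfun.
From mathcomp Require Import ring lra.
Import Order.TTheory GRing.Theory Num.Theory.
Import numFieldNormedType.Exports.
Local Open Scope classical_set_scope.
Local Open Scope ring_scope.
Local Open Scope ereal_scope.

Section Aux.
Variable R : realType.
Implicit Types (f : R -> \bar R).

Lemma mono_meas (D : set R) f : measurable D ->
  (forall x y, D x -> D y -> (x <= y)%R -> f y <= f x) -> measurable_fun D f.
Proof.
move=> mD fni; apply: (measurability _ (ErealGenOInfty.measurableE R)) => //.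
move=> /= _ [_ [r ->] <-].
rewrite preimage_itvoy.
have -> : D `&` [set x | r%:E < f x] =
   D `&` [set x | exists y, [/\ D y, r%:E < f y & (x <= y)%R]].
  apply/seteqP; split => x /= [Dx H]; split => //.
    by exists x; split.
  by case: H => y [Dy ry xy]; exact: (lt_le_trans ry (fni _ _ Dx Dy xy)).
apply: measurableI => //; apply: is_interval_measurable.
move=> x y _ [w [Dw rw yw]] z /andP[_ zy].
by exists w; split => //; exact: le_trans zy yw.
Qed.

Lemma rearr_ge0 f t : 0 <= rearr f t.
Proof.
apply: le_ereal_inf_tmp => _ [s [s0 _] <-]; by rewrite lee_fin.
Qed.

Lemma rearr_ni f x y : (x <= y)%R -> rearr f y <= rearr f x.
Proof.
move=> xy; apply: ereal_inf_le_tmp => _ [s [s0 hs] <-].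
exists s => //; split => //; apply: (le_trans hs); by rewrite lee_fin.
Qed.


Lemma rearr_meas f (D : set R) : measurable D -> measurable_fun D (rearr f).
Proof. by move=> mD; apply: mono_meas => // x y _ _; exact: rearr_ni. Qed.

Lemma int_cst_low (a b c : R) F : (a <= b)%R -> 0 <= c%:E ->
  measurable_fun `[a, b[ F ->
  (forall y, (a <= y < b)%R -> c%:E <= F y) ->
  (c * (b - a))%:E <= \int[@lebesgue_measure R]_(y in `[a, b[) F y.
Proof.
move=> ab c0 mF Fc.
have -> : (c * (b - a))%:E = \int[@lebesgue_measure R]_(y in `[a, b[) (cst c%:E) y.
  rewrite integral_cst //= lebesgue_measure_itv /= lte_fin.
  move: ab; rewrite le_eqVlt => /predU1P [->|ab'].
    by rewrite ltxx subrr mulr0 mule0.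
  by rewrite ab' EFinM EFinB.
apply: ge0_le_integral => //.
Qed.

Lemma int_cst_low' (i : interval R) (c : \bar R) F : 0 <= c ->
  measurable_fun [set` i] F ->
  (forall y, [set` i] y -> c <= F y) ->
  c * lebesgue_measure [set` i] <= \int[@lebesgue_measure R]_(y in [set` i]) F y.
Proof.
move=> c0 mF Fc; rewrite -integral_cst //.
by apply: ge0_le_integral => //; exact: measurable_cst.
Qed.

Lemma int_cst_up (i : interval R) (c : \bar R) F : 
  measurable_fun [set` i] F -> (forall y, [set` i] y -> 0 <= F y) ->
  (forall y, [set` i] y -> F y <= c) ->
  \int[@lebesgue_measure R]_(y in [set` i]) F y <= c * lebesgue_measure [set` i].
Proof.
move=> mF F0 Fc; rewrite -integral_cst //.
apply: ge0_le_integral => //; exact: measurable_cst.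
Qed.


Notation Leb := (@lebesgue_measure R).

Lemma leb_oo (a b : R) : (a <= b)%R -> Leb `]a, b[ = (b - a)%:E.
Proof.
rewrite lebesgue_measure_itv /= lte_fin le_eqVlt => /predU1P [->|ab].
  by rewrite ltxx subrr.
by rewrite ab EFinB.
Qed.

Lemma leb_co (a b : R) : (a <= b)%R -> Leb `[a, b[ = (b - a)%:E.
Proof.
rewrite lebesgue_measure_itv /= lte_fin le_eqVlt => /predU1P [->|ab].
  by rewrite ltxx subrr.
by rewrite ab EFinB.
Qed.

Arguments leb_oo {a b}.
Arguments leb_co {a b}.

Lemma intlow f x : (0 < x)%R ->
  x%:E * rearr f x <= \int[Leb]_(y in `]0%R, x[) rearr f y.
Proof.
move=> x0.
have := @int_cst_low' `]0%R, x[ (rearr f x) (rearr f) (rearr_ge0 _ _).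
rewrite (leb_oo (ltW x0)) subr0 muleC; apply => //; first exact: rearr_meas.
by move=> y /=; rewrite in_itv /= => /andP[_ /ltW]; exact: rearr_ni.
Qed.

Lemma int_ge0 f x : 0 <= \int[Leb]_(y in `]0%R, x[) rearr f y.
Proof. by apply: integral_ge0 => y _; exact: rearr_ge0. Qed.

Lemma maxfun_ge0 f x : (0 <= x)%R -> 0 <= maxfun f x.
Proof. by move=> x0; rewrite /maxfun mule_ge0 // ?lee_fin ?invr_ge0 // int_ge0. Qed.

Lemma maxfun_ni f x y : (0 < x)%R -> (x <= y)%R -> maxfun f y <= maxfun f x.
Proof.
move=> x0 xy; have y0 : (0 < y)%R by exact: lt_le_trans xy.
rewrite /maxfun.
set A := \int[Leb]_(y in `]0%R, x[) rearr f y.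
have A0 : 0 <= A by exact: int_ge0.
have hlow := @intlow f x x0.
have -> : \int[Leb]_(z in `]0%R, y[) rearr f z = A + \int[Leb]_(z in `[x, y[) rearr f z.
  rewrite (@itv_bndbnd_setU _ _ (BRight 0%R) (BLeft x) (BLeft y)) ?bnd_simp //.
  rewrite ge0_integral_setU //; first by apply: rearr_meas; apply: measurableU.
    by move=> z _; exact: rearr_ge0.
  rewrite disj_set2E; apply/eqP/seteqP; split => z //=.
  by rewrite !in_itv /= => -[/andP[_ zx] /andP[xz _]]; move: (lt_le_trans zx xz); rewrite ltxx.
have hup : \int[Leb]_(z in `[x, y[) rearr f z <= rearr f x * (y - x)%:E.
  rewrite -(leb_co xy); apply: int_cst_up; first exact: rearr_meas.
    by move=> z _; exact: rearr_ge0.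
  by move=> z /=; rewrite in_itv /= => /andP[xz _]; exact: rearr_ni.
case: (eqVneq A +oo) => [->|Afin].
  by rewrite mulry gtr0_sg ?invr_gt0 // mul1e leey.
have Afn : A \is a fin_num by rewrite ge0_fin_numE // ltey.
have phx : rearr f x \is a fin_num.
  rewrite ge0_fin_numE ?rearr_ge0 //.
  apply: (@le_lt_trans _ _ ((x^-1)%:E * A)); last by rewrite -(fineK Afn) -EFinM ltry.
  rewrite -(@lee_pmul2l _ x%:E) ?lte_fin // muleA -EFinM divff ?gt_eqF // mul1e.
  done.
rewrite -/A in hlow.
rewrite -(fineK Afn) -(fineK phx) in hlow hup *.
set a := fine A in hlow hup *; set p := fine (rearr f x) in hlow hup *.
rewrite -EFinM lee_fin in hlow.
rewrite -EFinM in hup.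
apply: (@le_trans _ _ ((y^-1)%:E * (a + p * (y - x))%:E)).
  apply: lee_pmul => //; rewrite ?lee_fin ?invr_ge0 ?(ltW y0) //.
    apply: adde_ge0; first by rewrite /a fineK.
    by apply: integral_ge0 => z _; exact: rearr_ge0.
  by rewrite EFinD leeD2l.
rewrite -!EFinM lee_fin.
rewrite ler_pdivrMl // mulrCA ler_pdivlMl //.
have : (0 <= y - x)%R by rewrite subr_ge0.
nra.
Qed.


Lemma maxfun_meas f : measurable_fun `](0%R : R), (1%R : R)[ (maxfun f).
Proof.
apply: mono_meas => // x y /=; rewrite in_itv /= => /andP[x0 _] _ xy.
exact: maxfun_ni.
Qed.

Lemma maxfun_le_rearr f s : (0 < s < 1)%R ->
  maxfun f s <= 2%:E * rearr (maxfun f) s.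
Proof.
move=> /andP[s0 s1]; set g := maxfun f.
have g0 z : (0 <= z)%R -> 0 <= g z by exact: maxfun_ge0.
suff H : (2^-1)%:E * g s <= rearr g s.
  rewrite -[X in X <= _]mul1e.
  have -> : (1 : \bar R) = 2%:E * (2^-1)%:E by rewrite -EFinM divff.
  rewrite -muleA; apply: lee_pmul => //; rewrite ?lee_fin //.
  by rewrite mule_ge0 // ?g0 ?(ltW s0) // lee_fin.
apply: le_ereal_inf_tmp => _ [r [r0 hr] <-].
rewrite leNgt; apply/negP => hlt.
set x1 := Num.min (2 * s)%R 1%R.
have sx1 : (s < x1)%R by rewrite lt_min s1 andbT; lra.
have x10 : (0 < x1)%R by exact: lt_trans sx1.
have sub : `]0%R, x1[ `<=` `]0%R, 1%R[ `&` [set x | r%:E < g x].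
  move=> z /=; rewrite !in_itv /= => /andP[z0 zx1].
  have z1 : (z < 1)%R by apply: (lt_le_trans zx1); rewrite ge_min lexx orbT.
  have z2s : (z < 2 * s)%R by apply: (lt_le_trans zx1); rewrite ge_min lexx.
  split; first by rewrite z0 z1.
  apply: (lt_le_trans hlt).
  case: (leP z s) => zs.
    apply: (le_trans _ (@maxfun_ni f z s z0 zs)).
    rewrite -[X in _ <= X]mul1e; apply: lee_pmul => //; rewrite ?lee_fin //.
      by rewrite g0 // ltW.
    lra.
  have hz : ((s / z)%:E * g s <= g z).
    rewrite /g /maxfun muleA -EFinM mulrAC divff ?gt_eqF // mul1r.
    apply: lee_pmul => //; first by rewrite lee_fin invr_ge0 ltW.
      exact: int_ge0.
    apply: ge0_subset_integral => //; first exact: rearr_meas.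
      by move=> y _; exact: rearr_ge0.
    move=> y /=; rewrite !in_itv /= => /andP[-> ys] /=; exact: lt_trans zs.
  apply: le_trans hz; apply: lee_pmul => //; rewrite ?lee_fin //.
    by rewrite g0 // ltW.
  rewrite ler_pdivlMr //; lra.
have mS : measurable (`](0%R : R), (1%R : R)[ `&` [set x | r%:E < g x]).
  exact: (emeasurable_fun_o_infty (measurable_itv _) (@maxfun_meas f) r%:E).
have H : Leb `]0%R, x1[ <= distrib g r.
  by apply: le_measure => //; rewrite inE //.
rewrite (leb_oo (ltW x10)) subr0 in H.
by have := le_trans H hr; rewrite lee_fin leNgt sx1.
Qed.


Local Close Scope ereal_scope.
Definition tj (t : R) (n : nat) := (t * (2^-1) ^+ n)%R.

Lemma tj_S t n : tj t n.+1 = tj t n / 2.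
Proof. by rewrite /tj exprSr mulrA. Qed.

Lemma tj_ni t n m : 0 <= t -> (n <= m)%N -> tj t m <= tj t n.
Proof.
move=> t0 nm; rewrite /tj ler_wpM2l //; apply: ler_wiXn2l => //.
by rewrite invf_le1 // ler1n.
Qed.

Lemma tj_gt0 t n : 0 < t -> 0 < tj t n.
Proof. by move=> t0; rewrite /tj mulr_gt0 // exprn_gt0 // invr_gt0. Qed.

Lemma tj_le t n : 0 <= t -> tj t n <= t.
Proof. by move=> t0; have := @tj_ni t 0 n t0 (leq0n _); rewrite /tj expr0 mulr1. Qed.

Lemma dyadic t s : 0 < s < t -> exists j, tj t j.+1 <= s < tj t j.
Proof.
move=> /andP[s0 st]; have t0 : 0 < t by exact: lt_trans st.
have ex : exists n, tj t n <= s.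
  exists (Num.Def.archi_bound (t / s)).
  set n := Num.Def.archi_bound (t / s).
  have h1 : t / s < n%:R by apply: archi_boundP; rewrite divr_ge0 // ltW.
  have h2 : (n%:R : R) <= 2 ^+ n.
    by rewrite -natrX ler_nat ltnW // ltn_expl.
  rewrite /tj exprVn -[s]mulr1 -[X in _ <= s * X](@divff _ (2 ^+ n)) ?expf_neq0 //.
  rewrite mulrA ler_wpM2r ?invr_ge0 ?exprn_ge0 //.
  by rewrite -ler_pdivrMl // mulrC ltW // (lt_le_trans h1 h2).
case: (ex_minnP ex) => m hm hmin.
case: m hm hmin => [|j] hm hmin.
  by move: hm; rewrite /tj expr0 mulr1 leNgt st.
exists j; rewrite hm /= ltNge; apply/negP => hj.
by have := hmin _ hj; rewrite ltnn.
Qed.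

Local Open Scope ereal_scope.
Section Main.
Variables (I : R -> R) (C : R).
Hypothesis Ipos : forall x, (0 < x < 1)%R -> (0 < I x)%R.
Hypothesis Imono : forall x y, (0 < x < 1)%R -> (0 < y < 1)%R -> (x <= y)%R -> (I x <= I y)%R.
Hypothesis Irat : forall x y, (0 < x < 1)%R -> (0 < y < 1)%R -> (x <= y)%R ->
          (I y / y <= I x / x)%R.
Hypothesis C0 : (0 < C)%R.
Hypothesis hC : forall t : R, (0 < t < 1)%R ->
       \int[Leb]_(s in `]0%R, t[) (I s / s)%:E <= (C * I t)%:E.

Definition N (f : R -> \bar R) (u : R) :=
  ereal_sup [set (s / I s)%:E * rearr f s | s in `[u, 1%R[].

Lemma TIE f u : TI I f u = (I u / u)%:E * N f u.
Proof. by []. Qed.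

Lemma N_ge0 f u : (0 < u < 1)%R -> 0 <= N f u.
Proof.
move=> /andP[u0 u1]; apply: (le_trans _ (ereal_sup_ubound _)); last first.
  by exists u => //=; rewrite in_itv /= lexx u1.
apply: mule_ge0; last exact: rearr_ge0.
by rewrite lee_fin divr_ge0 ?ltW // Ipos // u0.
Qed.

Lemma N_ni f u v : (u <= v)%R -> N f v <= N f u.
Proof.
move=> uv; apply: ereal_sup_le => _ [s /= + <-]; rewrite in_itv /= => /andP[vs s1].
by exists s => //=; rewrite in_itv /= s1 (le_trans uv).
Qed.

Lemma IE_ni (D : set R) : D `<=` `]0%R, 1%R[ -> forall x y, D x -> D y -> (x <= y)%R ->
  ((I y / y)%:E <= (I x / x)%:E).
Proof.
move=> sD x y /sD + /sD; rewrite /= !in_itv /= => hx hy xy.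
by rewrite lee_fin; apply: Irat.
Qed.

Lemma TI_ni f (D : set R) : D `<=` `]0%R, 1%R[ -> forall x y, D x -> D y -> (x <= y)%R ->
  TI I f y <= TI I f x.
Proof.
move=> sD x y Dx Dy xy; rewrite !TIE.
have := sD _ Dy; rewrite /= in_itv /= => hy.
have := sD _ Dx; rewrite /= in_itv /= => hx.
apply: lee_pmul; [|exact: N_ge0|exact: IE_ni sD x y Dx Dy xy|exact: N_ni].
by case/andP: (hy) => y0 _; rewrite lee_fin divr_ge0 // ltW // Ipos.
Qed.

Lemma TI_ge0 f u : (0 < u < 1)%R -> 0 <= TI I f u.
Proof.
move=> hu; rewrite TIE mule_ge0 //; last exact: N_ge0.
by rewrite lee_fin divr_ge0 ?ltW ?Ipos //; case/andP: hu.
Qed.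

Lemma TI_meas f (D : set R) : measurable D -> D `<=` `]0%R, 1%R[ ->
  measurable_fun D (TI I f).
Proof. by move=> mD sD; apply: mono_meas => //; exact: TI_ni. Qed.

Lemma rearr_TI_le f u : (0 < u < 1)%R -> rearr (TI I f) u <= TI I f u.
Proof.
move=> hu; set h := TI I f.
case: (eqVneq (h u) +oo) => [->|hfin]; first exact: leey.
have hfn : h u \is a fin_num by rewrite ge0_fin_numE ?TI_ge0 // ltey.
rewrite -(fineK hfn); apply: ereal_inf_lbound; exists (fine (h u)) => //; split.
  by rewrite -lee_fin fineK // TI_ge0.
have mS : measurable (`](0%R : R), (1%R : R)[ `&` [set x | (fine (h u))%:E < h x]).
  by apply: emeasurable_fun_o_infty => //; apply: TI_meas => //.
have sub : `](0%R : R), (1%R : R)[ `&` [set x | (fine (h u))%:E < h x] `<=` `]0%R, u[.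
  move=> x [] /=; rewrite !in_itv /= fineK // => /andP[x0 x1] hx.
  rewrite x0 /=; rewrite ltNge; apply/negP => ux.
  have := @TI_ni f `]0%R, 1%R[ (fun _ => id) u x; rewrite /= !in_itv /= => /(_ hu).
  by rewrite x0 x1 => /(_ isT ux); rewrite leNgt hx.
have H : Leb (`](0%R : R), (1%R : R)[ `&` [set x | (fine (h u))%:E < h x]) <= Leb `]0%R, u[.
  by apply: le_measure => //; rewrite inE.
apply: (le_trans H); case/andP: hu => u0 _.
by rewrite (leb_oo (ltW u0)) subr0.
Qed.


Definition bj f t j := ((tj t j / I (tj t j.+1))%:E * rearr f (tj t j.+1)).
Definition ej f t u j := if (u < tj t j)%R then bj f t j else 0.

Lemma tj_in t j : (0 < t < 1)%R -> (0 < tj t j < 1)%R.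
Proof.
case/andP=> t0 t1; rewrite tj_gt0 //=.
exact: le_lt_trans (@tj_le t j (ltW t0)) t1.
Qed.

Lemma bj_ge0 f t j : (0 < t < 1)%R -> 0 <= bj f t j.
Proof.
move=> ht; rewrite /bj mule_ge0 ?rearr_ge0 // lee_fin divr_ge0 //.
  by rewrite ltW // tj_gt0 //; case/andP: ht.
by rewrite ltW // Ipos // tj_in.
Qed.

Lemma ej_ge0 f t u j : (0 < t < 1)%R -> 0 <= ej f t u j.
Proof. by move=> ht; rewrite /ej; case: ifP => // _; exact: bj_ge0. Qed.

Lemma N_bound f t u : (0 < t < 1)%R -> (0 < u)%R ->
  N f u <= N f t + \sum_(j <oo) ej f t u j.
Proof.
move=> ht u0; have /andP[t0 t1] := ht.
have Sge0 : 0 <= \sum_(j <oo) ej f t u j.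
  by apply: nneseries_ge0 => n _ _; exact: ej_ge0.
apply: ge_ereal_sup => _ [s /= + <-]; rewrite in_itv /= => /andP[us s1].
have s0 : (0 < s)%R by exact: lt_le_trans us.
case: (leP t s) => ts.
  apply: (le_trans _ (leeDl _ Sge0)); apply: ereal_sup_ubound.
  by exists s => //=; rewrite in_itv /= ts s1.
have [j /andP[j1 j2]] := @dyadic t s ltac:(by rewrite s0 ts).
apply: (le_trans _ (leeDr _ (@N_ge0 f t ht))).
have hb : (s / I s)%:E * rearr f s <= ej f t u j.
  rewrite /ej (le_lt_trans us j2) /bj.
  have hj1 := @tj_in t j.+1 ht.
  have hs : (0 < s < 1)%R by rewrite s0 s1.
  apply: lee_pmul; first by rewrite lee_fin divr_ge0 // ltW // Ipos.
      exact: rearr_ge0.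
    rewrite lee_fin ler_pM //; first exact: ltW.
      by rewrite invr_ge0 ltW // Ipos.
      exact: ltW.
    rewrite lef_pV2 ?posrE ?Ipos //.
    exact: Imono.
  exact: rearr_ni.
apply: (le_trans hb).
have := @nneseries_lim_ge R (ej f t u) xpredT 0 j.+1 (fun n _ _ => @ej_ge0 f t u n ht).
move=> H; apply: (le_trans _ H).
rewrite big_nat_recr //=; apply: leeDr.
by apply: sume_ge0 => n _; exact: ej_ge0.
Qed.


Definition Ifun (v : R) := (I v / v)%:E.
Definition Fj f t j u := bj f t j * ((Ifun \_ `]-oo, tj t j[) u).

Lemma Ifun_ge0 u : (0 < u < 1)%R -> 0 <= Ifun u.
Proof. by move=> hu; rewrite /Ifun lee_fin divr_ge0 ?ltW ?Ipos //; case/andP: hu. Qed.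

Lemma Fj_E f t j u : Ifun u * ej f t u j = Fj f t j u.
Proof.
rewrite /ej /Fj /patch; case: ifPn => hu.
  by rewrite mem_set /= ?in_itv //= muleC.
rewrite ifF ?mule0 //; apply/negP; rewrite inE /= in_itv /=.
by move=> H; move: hu; rewrite H.
Qed.

Lemma TI_bound f t u : (0 < t < 1)%R -> (0 < u < 1)%R ->
  TI I f u <= Ifun u * N f t + \sum_(j <oo) Fj f t j u.
Proof.
move=> ht hu; rewrite TIE -/(Ifun u).
have Sge0 : 0 <= \sum_(j <oo) ej f t u j.
  by apply: nneseries_ge0 => n _ _; exact: ej_ge0.
apply: le_trans (_ : Ifun u * (N f t + \sum_(j <oo) ej f t u j) <= _).
  apply: lee_pmul => //; first exact: Ifun_ge0.
    exact: N_ge0.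
  by apply: N_bound => //; case/andP: hu.
rewrite ge0_muleDr //; last exact: N_ge0.
rewrite /Ifun -nneseriesZl; last by move=> n _; exact: ej_ge0.
apply: leeD2l; apply: lee_nneseries.
  by move=> n _ _; rewrite mule_ge0 ?ej_ge0 //; exact: Ifun_ge0.
by move=> n _; rewrite -/(Ifun u) Fj_E.
Qed.


Lemma patch_ge0 (A : set R) u : (0 < u < 1)%R -> 0 <= (Ifun \_ A) u.
Proof. by move=> hu; rewrite /patch; case: ifP => // _; exact: Ifun_ge0. Qed.

Lemma patch_ni (D : set R) (b : R) : D `<=` `]0%R, 1%R[ -> forall x y, D x -> D y -> (x <= y)%R ->
  (Ifun \_ `]-oo, b[) y <= (Ifun \_ `]-oo, b[) x.
Proof.
move=> sD x y Dx Dy xy; have := sD _ Dx; have := sD _ Dy; rewrite /= !in_itv /= => hy hx.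
rewrite {1}/patch; case: ifPn => hyb; last exact: patch_ge0.
rewrite /patch mem_set; last first.
  by move: hyb; rewrite inE /= !in_itv /= => /(le_lt_trans xy).
exact: (@IE_ni D sD x y Dx Dy xy).
Qed.

Lemma Fj_ge0 f t j u : (0 < t < 1)%R -> (0 < u < 1)%R -> 0 <= Fj f t j u.
Proof. by move=> ht hu; rewrite /Fj mule_ge0 ?bj_ge0 ?patch_ge0. Qed.

Lemma Fj_ni f t j (D : set R) : (0 < t < 1)%R -> D `<=` `]0%R, 1%R[ ->
  forall x y, D x -> D y -> (x <= y)%R -> Fj f t j y <= Fj f t j x.
Proof.
move=> ht sD x y Dx Dy xy; have := sD _ Dy; rewrite /= in_itv /= => hy.
apply: lee_pmul; [exact: bj_ge0|exact: patch_ge0|by []|exact: patch_ni sD _ _ Dx Dy xy].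
Qed.

Lemma sFj_ni f t (D : set R) : (0 < t < 1)%R -> D `<=` `]0%R, 1%R[ ->
  forall x y, D x -> D y -> (x <= y)%R ->
  \sum_(j <oo) Fj f t j y <= \sum_(j <oo) Fj f t j x.
Proof.
move=> ht sD x y Dx Dy xy; have := sD _ Dy; rewrite /= in_itv /= => hy.
apply: lee_nneseries; first by move=> n _ _; exact: Fj_ge0.
by move=> n _; exact: Fj_ni sD _ _ Dx Dy xy.
Qed.

Lemma sub0t t : (t < 1)%R -> `]0%R, t[ `<=` `](0%R : R), (1%R : R)[.
Proof.
move=> t1 x /=; rewrite !in_itv /= => /andP[-> xt] /=; exact: lt_trans t1.
Qed.

Lemma int_Fj f t j : (0 < t < 1)%R ->
  \int[Leb]_(u in `]0%R, t[) Fj f t j u <= bj f t j * (C * I (tj t j))%:E.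
Proof.
move=> ht; have /andP[t0 t1] := ht.
rewrite /Fj ge0_integralZl //; last exact: bj_ge0.
- apply: lee_pmul => //; first exact: bj_ge0.
    by apply: integral_ge0 => u /(@sub0t t t1); rewrite /= in_itv /=; exact: patch_ge0.
  rewrite -integral_mkcondr.
  have -> : `]0%R, t[%classic `&` `]-oo, tj t j[%classic = `]0%R, tj t j[%classic :> set R.
    apply/seteqP; split => x /=; rewrite !in_itv /=.
      by case=> /andP[-> _] ->.
    move=> /andP[-> xj]; rewrite xj; split => //.
    exact: lt_le_trans xj (@tj_le t j (ltW t0)).
  exact: hC (@tj_in t j ht).
- by apply: mono_meas => //; apply: patch_ni; exact: (@sub0t t t1).
- by move=> u /(@sub0t t t1); rewrite /= in_itv /=; exact: patch_ge0.
Qed.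


Lemma bj_bound f t j : (0 < t < 1)%R ->
  bj f t j * (C * I (tj t j))%:E <=
  (8 * C)%:E * \int[Leb]_(u in `[tj t j.+2, tj t j.+1[) rearr f u.
Proof.
move=> ht; set a := tj t j.+1.
have ha : (0 < a < 1)%R by exact: tj_in.
have hj : (0 < tj t j < 1)%R by exact: tj_in.
have a0 : (0 < a)%R by case/andP: ha.
have e1 : tj t j = (2 * a)%R by rewrite /a tj_S; field.
have e2 : tj t j.+2 = (a / 2)%R by rewrite tj_S.
have Ia0 : (0 < I a)%R by exact: Ipos.
have I2a : (I (tj t j) <= 2 * I a)%R.
  have := @Irat a (tj t j) ha hj; rewrite e1 => /(_ ltac:(lra)).
  rewrite ler_pdivrMr; last lra.
  have -> : (I a / a * (2 * a) = 2 * I a)%R by field; rewrite gt_eqF.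
  by [].
have L : rearr f a * Leb `[(a / 2)%R, a[ <=
    \int[Leb]_(u in `[(a / 2)%R, a[) rearr f u.
  apply: int_cst_low'; first exact: rearr_ge0.
    exact: rearr_meas.
  by move=> y /=; rewrite in_itv /= => /andP[_ /ltW]; exact: rearr_ni.
rewrite (leb_co (_ : a / 2 <= a)%R) in L; last lra.
rewrite e2; apply: (le_trans _ (lee_wpmul2l _ L)); last by rewrite lee_fin mulr_ge0 // ltW.
rewrite /bj -/a muleAC -EFinM (muleC (rearr f a)) muleA -EFinM.
apply: lee_wpmul2r; first exact: rearr_ge0.
rewrite lee_fin.
have tj0 : (0 < tj t j)%R by case/andP: hj.
apply: (@le_trans _ _ (tj t j / I a * (C * (2 * I a)))%R).
  rewrite ler_wpM2l //; first by rewrite divr_ge0 // ltW.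
  by rewrite ler_wpM2l // ltW.
rewrite e1.
have -> : (2 * a / I a * (C * (2 * I a)) = 4 * a * C)%R by field; rewrite gt_eqF.
lra.
Qed.


Lemma sum_int f t : (0 < t < 1)%R ->
  \sum_(j <oo) \int[Leb]_(u in `[tj t j.+2, tj t j.+1[) rearr f u <=
  \int[Leb]_(u in `]0%R, t[) rearr f u.
Proof.
move=> /andP[t0 t1].
set F := fun j => `[tj t j.+2, tj t j.+1[%classic : set R.
have mF : forall k, measurable (F k) by move=> k; exact: measurable_itv.
have tF : trivIset [set: nat] F.
  move=> i k _ _ [x []]; rewrite /F /= !in_itv /= => /andP[a1 a2] /andP[b1 b2].
  case: (ltngtP i k) => // ik.
    have := @tj_ni t i.+2 k.+1 (ltW t0) ik.
    by move=> h; have := lt_le_trans (le_lt_trans a1 b2) h; rewrite ltxx.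
  have := @tj_ni t k.+2 i.+1 (ltW t0) ik.
  by move=> h; have := lt_le_trans (le_lt_trans b1 a2) h; rewrite ltxx.
rewrite -(@ge0_integral_bigcup _ _ _ Leb F (rearr f) mF
   (@rearr_meas f _ (bigcupT_measurable F mF)) (fun x _ => rearr_ge0 f x) tF).
apply: ge0_subset_integral => //; first exact: bigcupT_measurable.
- exact: rearr_meas.
- by move=> x _; exact: rearr_ge0.
move=> x [k _]; rewrite /F /= !in_itv /= => /andP[a1 a2].
rewrite (lt_le_trans (@tj_gt0 t k.+2 t0) a1) /=.
exact: lt_le_trans a2 (@tj_le t k.+1 (ltW t0)).
Qed.


Lemma int_TI f t : (0 < t < 1)%R ->
  \int[Leb]_(u in `]0%R, t[) TI I f u <=
  (C * I t)%:E * N f t + (8 * C)%:E * \int[Leb]_(u in `]0%R, t[) rearr f u.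
Proof.
move=> ht; have /andP[t0 t1] := ht.
have sD := @sub0t t t1.
have hu : forall u, `]0%R, t[%classic u -> (0 < u < 1)%R.
  by move=> u /sD; rewrite /= in_itv.
have Nt0 := @N_ge0 f t ht.
have m1 : measurable_fun `]0%R, t[ (fun u => Ifun u * N f t).
  apply: mono_meas => // x y Dx Dy xy; apply: lee_wpmul2r => //.
  exact: (@IE_ni _ sD x y Dx Dy xy).
have m2 : measurable_fun `]0%R, t[ (fun u => \sum_(j <oo) Fj f t j u).
  by apply: mono_meas => //; exact: sFj_ni.
have mFj : forall j, measurable_fun `]0%R, t[ (Fj f t j).
  by move=> j; apply: mono_meas => //; exact: Fj_ni.
apply: (@le_trans _ _ (\int[Leb]_(u in `]0%R, t[) (Ifun u * N f t + \sum_(j <oo) Fj f t j u))).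
  apply: ge0_le_integral => //.
  - by move=> u /hu; exact: TI_ge0.
  - exact: TI_meas.
  - by apply: emeasurable_funD.
  - by move=> u /hu hu'; exact: TI_bound.
rewrite ge0_integralD //; first last.
- by move=> u /hu hu'; apply: nneseries_ge0 => n _ _; exact: Fj_ge0.
- by move=> u /hu hu'; rewrite mule_ge0 // Ifun_ge0.
rewrite ge0_integralZr //; last by move=> u /hu; exact: Ifun_ge0.
  2: by apply: mono_meas => // x y Dx Dy xy; exact: (@IE_ni _ sD x y Dx Dy xy).
rewrite integral_nneseries //; last by move=> n u /hu; exact: Fj_ge0.
apply: leeD.
  by apply: lee_wpmul2r => //; exact: hC.
apply: (@le_trans _ _ (\sum_(j <oo) ((8 * C)%:E *
    \int[Leb]_(u in `[tj t j.+2, tj t j.+1[) rearr f u))).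
  apply: lee_nneseries.
    by move=> n _ _; apply: integral_ge0 => u /hu; exact: Fj_ge0.
  move=> n _; apply: (le_trans (@int_Fj f t n ht)); exact: bj_bound.
rewrite nneseriesZl; last by move=> n _; apply: integral_ge0 => u _; exact: rearr_ge0.
apply: lee_wpmul2l; first by rewrite lee_fin mulr_ge0 // ltW.
exact: sum_int.
Qed.


Lemma rearr_le_maxfun f s : (0 < s)%R -> rearr f s <= maxfun f s.
Proof.
move=> s0; have := @intlow f s s0.
rewrite /maxfun => H.
rewrite -[X in X <= _]mul1e -(@divff _ s) ?gt_eqF // mulrC EFinM -muleA.
by apply: lee_wpmul2l => //; rewrite lee_fin invr_ge0 ltW.
Qed.

Lemma Nf_le f t : (0 < t < 1)%R -> N f t <= 2%:E * N (maxfun f) t.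
Proof.
move=> ht; apply: ge_ereal_sup => _ [s /= + <-]; rewrite in_itv /= => /andP[ts s1].
have hs : (0 < s < 1)%R by rewrite s1 andbT; case/andP: ht => t0 _; exact: lt_le_trans ts.
have s0 : (0 < s)%R by case/andP: hs.
have k0 : 0 <= (s / I s)%:E by rewrite lee_fin divr_ge0 // ltW // Ipos.
apply: (@le_trans _ _ ((s / I s)%:E * (2%:E * rearr (maxfun f) s))).
  apply: lee_wpmul2l => //; apply: (le_trans (@rearr_le_maxfun f s s0)).
  exact: maxfun_le_rearr.
rewrite muleCA; apply: lee_wpmul2l => //; apply: ereal_sup_ubound.
by exists s => //=; rewrite in_itv /= ts s1.
Qed.

Lemma g_le f t : (0 < t < 1)%R ->
  maxfun f t <= 2%:E * TI I (maxfun f) t.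
Proof.
move=> ht; have /andP[t0 t1] := ht.
apply: (le_trans (@maxfun_le_rearr f t ht)).
apply: lee_wpmul2l => //; rewrite TIE.
have It0 : (0 < I t)%R by exact: Ipos.
rewrite -[X in X <= _]mul1e -(@divff _ (I t / t)) ?gt_eqF ?divr_gt0 //.
rewrite EFinM -muleA; apply: lee_wpmul2l; first by rewrite lee_fin divr_ge0 ?ltW.
apply: ereal_sup_ubound; exists t => /=; first by rewrite in_itv /= lexx t1.
by rewrite invf_div.
Qed.

Lemma main_ineq f t : (0 < t < 1)%R ->
  maxfun (TI I f) t <= (18 * C)%:E * TI I (maxfun f) t.
Proof.
move=> ht; have /andP[t0 t1] := ht.
have sD := @sub0t t t1.
have hu : forall u, `]0%R, t[%classic u -> (0 < u < 1)%R.
  by move=> u /sD; rewrite /= in_itv.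
set X := TI I (maxfun f) t.
have X0 : 0 <= X by exact: TI_ge0.
have tinv0 : 0 <= (t^-1)%:E by rewrite lee_fin invr_ge0 ltW.
rewrite /maxfun.
apply: (@le_trans _ _ ((t^-1)%:E * \int[Leb]_(u in `]0%R, t[) TI I f u)).
  apply: lee_wpmul2l => //; apply: ge0_le_integral => //.
  - by move=> u _; exact: rearr_ge0.
  - exact: rearr_meas.
  - exact: TI_meas.
  - by move=> u /hu; exact: rearr_TI_le.
apply: (le_trans (lee_wpmul2l tinv0 (@int_TI f t ht))).
have Nf0 := @N_ge0 f t ht.
have C0' : (0 <= C)%R := ltW C0.
have It0 : (0 < I t)%R by exact: Ipos.
have t0' : (0 <= t)%R := ltW t0.
rewrite ge0_muleDr; first last.
- by rewrite mule_ge0 //; [rewrite lee_fin mulr_ge0 | exact: int_ge0].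
- by rewrite mule_ge0 // lee_fin mulr_ge0 // ltW.
have -> : (18 * C)%:E * X = (2 * C)%:E * X + (16 * C)%:E * X.
  by rewrite -ge0_muleDl ?lee_fin ?mulr_ge0 // -EFinD; congr (_%:E * _); lra.
apply: leeD.
  rewrite muleA -EFinM.
  apply: (@le_trans _ _ ((t^-1 * (C * I t))%:E * (2%:E * N (maxfun f) t))).
    by apply: lee_wpmul2l; [rewrite lee_fin mulr_ge0 ?invr_ge0 ?mulr_ge0 // ltW|exact: Nf_le].
  rewrite muleCA muleA -EFinM /X TIE muleA -EFinM.
  apply: lee_wpmul2r; first exact: N_ge0.
  rewrite lee_fin; have -> : (2 * (t^-1 * (C * I t)) = 2 * C * (I t / t))%R by field; rewrite gt_eqF.
  by [].
rewrite muleCA -[X in (8 * C)%:E * X]/(maxfun f t).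
apply: (@le_trans _ _ ((8 * C)%:E * (2%:E * X))).
  by apply: lee_wpmul2l; [rewrite lee_fin mulr_ge0|exact: g_le].
rewrite muleA -EFinM; apply: lee_wpmul2r => //; rewrite lee_fin; lra.
Qed.

End Main.
End Aux.

Theorem theorem3p12 (R : realType) (I : R -> R) :
  quasiconcave I ->
  (exists2 C : R, (0 < C)%R &
     forall t : R, (0 < t < 1)%R ->
       \int[@lebesgue_measure R]_(s in `]0%R, t[) (I s / s)%:E <= (C * I t)%:E) ->
  exists2 C : R, (0 < C)%R &
    forall f : R -> \bar R,
      measurable_fun `](0%R : R), (1%R : R)[ f ->
      (forall x : R, (0 < x < 1)%R -> 0 <= f x) ->
      forall t : R, (0 < t < 1)%R ->
        maxfun (TI I f) t <= C%:E * TI I (maxfun f) t.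
Proof.
move=> [h1 [_ [_ [h4 [_ [_ h7]]]]]] [C C0 hC].
have Ipos : forall x, (0 < x < 1)%R -> (0 < I x)%R.
  by move=> x /h1 /andP[].
exists (18 * C)%R; first by rewrite mulr_gt0.
move=> f _ _ t ht.
exact: (@main_ineq R I C Ipos h4 h7 C0 hC f t ht).
Qed.
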